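(* Let $(\mathcal A,\mathcal B,\mathcal C)$ be a generic triple of flags in an $m$-dimensional $R$-vector space $V$. For integers $a,b,c\ge1$ with $a+b+c=m+2$, the space $\mathcal A^{a-1}\cap\mathcal B^{b-1}\cap\mathcal C^{c-1}$ is a line, and the compositions of its inclusion with the projections give isomorphisms onto $\mathrm{gr}^a\mathcal A$, $\mathrm{gr}^b\mathcal B$, $\mathrm{gr}^c\mathcal C$; composing the inverse of one of these with another yields canonical isomorphisms between any two of $\mathrm{gr}^a\mathcal A,\mathrm{gr}^b\mathcal B,\mathrm{gr}^c\mathcal C$. Then: (1) for any $a,b,c\ge1$ with $a+b+c=m+2$, the composition of the canonical isomorphisms $\mathrm{gr}^a\mathcal A\to\mathrm{gr}^b\mathcal B\to\mathrm{gr}^c\mathcal C\to\mathrm{gr}^a\mathcal A$ is the identity; (2) for any $a,b,c\ge2$ with $a+b+c=m+4$, the composition of the six canonical isomorphisms around the hexagon $$\mathrm{gr}^a\mathcal A\to\mathrm{gr}^{b-1}\mathcal B\to\mathrm{gr}^{c}\mathcal C\to\mathrm{gr}^{a-1}\mathcal A\to\mathrm{gr}^{b}\mathcal B\to\mathrm{gr}^{c-1}\mathcal C\to\mathrm{gr}^a\mathcal A$$ equals $-\mathrm{Id}$.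
   Context: $R$ is a skew field; vector spaces are free left $R$-modules. A flag $\mathcal F$ in $V$ is a filtration $V=\mathcal F^0\supset\dots\supset\mathcal F^m=0$ with $\operatorname{codim}\mathcal F^i=i$, and $\mathrm{gr}^i\mathcal F:=\mathcal F^{i-1}/\mathcal F^i$. A triple of flags is generic if $V\to V/\mathcal A^a\oplus V/\mathcal B^b\oplus V/\mathcal C^c$ is an isomorphism for all $a,b,c\ge0$ with $a+b+c=m$. *)

(* Defs.v *)
From HB Require Import structures.
From mathcomp Require Import all_boot all_algebra.
Set Implicit Arguments. Unset Strict Implicit. Unset Printing Implicit Defensive.
Import GRing.Theory.
Local Open Scope ring_scope.

(* The m-dimensional left R-vector space V is 'rV[R]_m (left scaling *:). *)

Section Defs.
Variables (R : unitRingType) (m : nat).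
Local Notation V := 'rV[R]_m.

Definition skew_field := forall x : R, x != 0 -> x \is a GRing.unit.

Definition subspace (S : V -> Prop) : Prop :=
  [/\ S 0, (forall u v, S u -> S v -> S (u + v)) &
      (forall (a : R) u, S u -> S (a *: u))].

Definition lin_indep (d : nat) (v : 'I_d -> V) : Prop :=
  forall c : 'I_d -> R, \sum_(i < d) c i *: v i = 0 -> forall i, c i = 0.

Definition has_dim (S : V -> Prop) (d : nat) : Prop :=
  subspace S /\
  exists v : 'I_d -> V, [/\ forall i, S (v i), lin_indep v &
     forall x, S x -> exists c : 'I_d -> R, x = \sum_(i < d) c i *: v i].

(* V = F 0 ⊃ F 1 ⊃ ... ⊃ F m = 0 with codim (F i) = i *)
Definition is_flag (F : nat -> V -> Prop) : Prop :=
  (forall i, (i <= m)%N -> has_dim (F i) (m - i)) /\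
  (forall i, (i < m)%N -> forall v, F i.+1 v -> F i v).

(* V -> V/A^a ⊕ V/B^b ⊕ V/C^c, v |-> (v mod A^a, v mod B^b, v mod C^c),
   is injective (kernel A^a ∩ B^b ∩ C^c is 0) and surjective. *)
Definition generic (A B C : nat -> V -> Prop) : Prop :=
  forall a b c, (a + b + c)%N = m ->
    (forall v, A a v -> B b v -> C c v -> v = 0) /\
    (forall x y z : V, exists v, [/\ A a (v - x), B b (v - y) & C c (v - z)]).

Definition tri_cap (A B C : nat -> V -> Prop) (a b c : nat) : V -> Prop :=
  fun v => [/\ A a.-1 v, B b.-1 v & C c.-1 v].

(* the projection L -> gr^a F = F^(a-1)/F^a (L ⊆ F^(a-1)) is an isomorphism:
   injective (kernel L ∩ F^a is 0) and surjective. *)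
Definition proj_gr_iso (L : V -> Prop) (F : nat -> V -> Prop) (a : nat) : Prop :=
  (forall l, L l -> F a l -> l = 0) /\
  (forall x, F a.-1 x -> exists l, L l /\ F a (l - x)).

(* canonical isomorphism gr^a F -> gr^b G through the line
   F^(a-1) ∩ G^(b-1) ∩ H^(c-1) (with a+b+c = m+2), expressed on
   representatives: canon F G H a b c x y  means that the class of
   y in gr^b G is the image of the class of x in gr^a F. *)
Definition canon (F G H : nat -> V -> Prop) (a b c : nat) (x y : V) : Prop :=
  exists l, [/\ tri_cap F G H a b c l, F a (l - x) & G b (l - y)].

End Defs.

(* Main.v *)
Require Import Defs.
From HB Require Import structures.
From mathcomp Require Import all_boot all_algebra.
From Stdlib Require Import Classical.
From mathcomp Require Import zify.
Import GRing.Theory.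
Set Implicit Arguments. Unset Strict Implicit.
Local Open Scope ring_scope.

Section Aux.
Variables (R : unitRingType) (HR : skew_field R) (m : nat).
Local Notation V := 'rV[R]_m.

Lemma sumr_lift n (F : 'I_n.+1 -> V) :
  \sum_(i < n.+1) F i = \sum_(i < n) F (lift ord_max i) + F ord_max.
Proof. by rewrite (bigD1_ord ord_max) //= addrC. Qed.

Lemma sub_add S (u v : V) : subspace S -> S u -> S v -> S (u + v).
Proof. by case=> _ h _; apply: h. Qed.
Lemma sub_opp S (u : V) : subspace S -> S u -> S (- u).
Proof. by case=> _ _ h hu; rewrite -scaleN1r; apply: h. Qed.
Lemma sub_sub S (u v : V) : subspace S -> S u -> S v -> S (u - v).
Proof. by move=> hS hu hv; apply: sub_add => //; apply: sub_opp. Qed.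
Lemma sub_scale S a (u : V) : subspace S -> S u -> S (a *: u).
Proof. by case=> _ _ h; apply: h. Qed.
Lemma sub0 S : subspace S -> S (0 : V).
Proof. by case. Qed.
Lemma sub_sum S n (c : 'I_n -> R) (w : 'I_n -> V) : subspace S ->
  (forall i, S (w i)) -> S (\sum_(i < n) c i *: w i).
Proof.
move=> hS hw; apply: (big_ind S); first exact: sub0.
- by move=> x y; apply: sub_add.
- by move=> i _; apply: sub_scale.
Qed.

Lemma subBB (u v x : V) : (u - x) - (v - x) = u - v.
Proof. by rewrite opprB addrA subrK. Qed.

Lemma nz_unit (a : R) : a != 0 -> a \is a GRing.unit.
Proof. exact: HR. Qed.

Lemma scale_eq0 (a : R) (v : V) : a *: v = 0 -> a != 0 -> v = 0.
Proof.
move=> h ha; rewrite -[v]scale1r -(@mulVr _ a (nz_unit ha)) -scalerA h.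
by rewrite scaler0.
Qed.

Lemma steinitz n : forall k (v : 'I_k -> V) (w : 'I_n -> V)
  (c : 'I_k -> 'I_n -> R), lin_indep v ->
  (forall i, v i = \sum_(j < n) c i j *: w j) -> (k <= n)%N.
Proof.
elim: n => [|n IH] k v w c hv hc.
  case: k v c hv hc => // k v c hv hc; exfalso.
  have := hv (fun _ => 1) _ ord0.
  rewrite big1 => [|i _]; last by rewrite scale1r hc big_ord0.
  by move=> /(_ erefl) /eqP; rewrite oner_eq0.
have [i0 hi0|all0] := pickP (fun i => c i ord_max != 0); last first.
  apply: leqW; apply: (IH k v (fun j => w (widen_ord (leqnSn n) j))
     (fun i j => c i (widen_ord (leqnSn n) j)) hv) => i.
  by rewrite hc big_ord_recr /= (eqP (negbFE (all0 i))) scale0r addr0.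
have kpos : (0 < k)%N := leq_ltn_trans (leq0n i0) (ltn_ord i0).
case: k v c hv hc i0 hi0 kpos => // k v c hv hc i0 hi0 _.
set u := c i0 ord_max.
have hu : u \is a GRing.unit := nz_unit hi0.
pose d j := c (lift i0 j) ord_max * u^-1.
pose v' j := v (lift i0 j) - d j *: v i0.
pose c' j t := c (lift i0 j) (widen_ord (leqnSn n) t) - d j * c i0 (widen_ord (leqnSn n) t).
rewrite ltnS; apply: (IH k v' (fun j => w (widen_ord (leqnSn n) j)) c').
  move=> e he j.
  pose E i := if unlift i0 i is Some j then e j else - \sum_(j < k) e j * d j.
  have hE : \sum_i E i *: v i = 0.
    rewrite (bigD1_ord i0) //= /E unlift_none.
    under eq_bigr => i _ do rewrite liftK.
    have he2 : \sum_(i < k) e i *: v (lift i0 i) - (\sum_(j < k) e j * d j) *: v i0 = 0.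
      by rewrite -[in RHS]he scaler_suml -sumrB; apply: eq_bigr => i _; rewrite scalerBr scalerA.
    by rewrite scaleNr addrC.
  by have := hv E hE (lift i0 j); rewrite /E liftK.
move=> j; rewrite /v' /c' !hc scaler_sumr -sumrB.
under eq_bigr => i _ do rewrite scalerA -scalerBl.
rewrite big_ord_recr /= /d -mulrA (mulVr hu) mulr1 subrr scale0r addr0.
done.
Qed.


Lemma dim_le S n k (v : 'I_k -> V) : has_dim S n -> lin_indep v ->
  (forall i, S (v i)) -> (k <= n)%N.
Proof.
case=> _ [w [_ _ hw]] hv hvS.
have [c hc] := fin_all_exists (fun i => hw _ (hvS i)).
exact: steinitz hv hc.
Qed.

Definition ext k (v : 'I_k -> V) (y : V) : 'I_k.+1 -> V :=
  fun t => if unlift ord_max t is Some t' then v t' else y.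

Lemma ext_indep k (v : 'I_k -> V) y : lin_indep v ->
  (forall c : 'I_k -> R, y <> \sum_(i < k) c i *: v i) -> lin_indep (ext v y).
Proof.
move=> hv hy e.
rewrite sumr_lift /ext unlift_none.
under eq_bigr => i _ do rewrite liftK.
move=> he.
have hmax : e ord_max = 0.
  case: (eqVneq (e ord_max) 0) => // hne; exfalso.
  apply: (hy (fun i => - ((e ord_max)^-1 * e (lift ord_max i)))).
  rewrite -[y]scale1r -(@mulVr _ (e ord_max) (nz_unit hne)) -scalerA.
  move/eqP: he; rewrite addrC addr_eq0 => /eqP ->.
  rewrite scalerN scaler_sumr -sumrN; apply: eq_bigr => i _.
  by rewrite scalerA scaleNr.
move: he; rewrite hmax scale0r addr0 => /hv he t.
by case: (unliftP ord_max t) => [j ->|->].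
Qed.

Lemma flag_sub (F : nat -> V -> Prop) i : is_flag F -> (i <= m)%N -> subspace (F i).
Proof. by move=> hF hi; case: (hF.1 i hi). Qed.

Lemma flag_mono (F : nat -> V -> Prop) i (v : V) : is_flag F -> (i < m)%N -> F i.+1 v -> F i v.
Proof. by move=> hF hi; apply: hF.2. Qed.

Lemma gr_line (F : nat -> V -> Prop) i (hF : is_flag F) (hi : (i < m)%N) (v0 x : V) :
  F i v0 -> ~ F i.+1 v0 -> F i x -> exists r, F i.+1 (x - r *: v0).
Proof.
move=> h0 hn0 hx; apply: NNPP => H.
have [sub1 [w [hw1 hw2 hw3]]] := hF.1 i.+1 hi.
have hd0 := hF.1 i (ltnW hi).
have hsub : forall u, F i.+1 u -> F i u := hF.2 i hi.
have i1 : lin_indep (ext w v0).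
  apply: ext_indep => // c hc; apply: hn0; rewrite hc; exact: sub_sum.
have i2 : lin_indep (ext (ext w v0) x).
  apply: ext_indep => // c hc; apply: H; exists (c ord_max).
  rewrite hc sumr_lift {2}/ext unlift_none addrK.
  apply: (sub_sum _ sub1) => t; rewrite /ext liftK; exact: hw1.
have := dim_le hd0 i2.
have hin : forall t, F i (ext (ext w v0) x t).
  move=> t; rewrite /ext; case: (unliftP ord_max t) => [t' _|_] //.
  case: (unliftP ord_max t') => [t'' _|_] //.
  by apply: hsub; apply: hw1.
move/(_ hin); lia.
Qed.


Lemma generic_rot (F G H : nat -> V -> Prop) :
  generic F G H -> generic G H F.
Proof.
move=> hg b c a hs; have [inj surj] := hg a b c ltac:(lia).
split; first by move=> v hb hc ha; apply: inj.
move=> x y z; have [v [h1 h2 h3]] := surj z x y; by exists v.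
Qed.

Lemma proj_gr_iso_ext (L L' : V -> Prop) F a : (forall v, L v <-> L' v) ->
  proj_gr_iso L F a -> proj_gr_iso L' F a.
Proof.
move=> e [h1 h2]; split; first by move=> l /e; apply: h1.
move=> x /h2 [l [hl hl2]]; exists l; split => //; exact/e.
Qed.

Lemma part1_iso (F G H : nat -> V -> Prop) (hF : is_flag F) (hG : is_flag G)
  (hH : is_flag H) (hg : generic F G H) a b c :
  (1 <= a)%N -> (1 <= b)%N -> (1 <= c)%N -> (a + b + c)%N = (m + 2)%N ->
  proj_gr_iso (tri_cap F G H a b c) F a.
Proof.
case: a => // a; case: b => // b; case: c => // c _ _ _ hs.
have [inj surj] := hg a.+1 b c ltac:(lia).
rewrite /tri_cap /=; split.
  by move=> l [h1 h2 h3] h4; apply: inj.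
move=> x hx; have [v [h1 h2 h3]] := surj x 0 0.
exists v; rewrite !subr0 in h2 h3; split => //; split => //.
rewrite -(subrK x v); apply: (sub_add (flag_sub hF _)) => //; first lia.
by apply: flag_mono => //; lia.
Qed.

Lemma part1_dim (F G H : nat -> V -> Prop) (hF : is_flag F) (hG : is_flag G)
  (hH : is_flag H) (hg : generic F G H) a b c :
  (1 <= a)%N -> (1 <= b)%N -> (1 <= c)%N -> (a + b + c)%N = (m + 2)%N ->
  has_dim (tri_cap F G H a b c) 1.
Proof.
move=> ha hb hc hs; have [inj surj] := part1_iso hF hG hH hg ha hb hc hs.
move: inj surj hs; case: a ha => // a _; case: b hb => // b _; case: c hc => // c _.
move=> inj surj hs.
have hL : subspace (tri_cap F G H a.+1 b.+1 c.+1).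
  have sF := flag_sub (i := a) hF ltac:(lia).
  have sG := flag_sub (i := b) hG ltac:(lia).
  have sH := flag_sub (i := c) hH ltac:(lia).
  rewrite /tri_cap /=; split.
  - by split; apply: sub0.
  - by move=> u v [? ? ?] [? ? ?]; split; apply: sub_add.
  - by move=> r u [? ? ?]; split; apply: sub_scale.
have [_ [u [hu1 hu2 _]]] := hF.1 a ltac:(lia).
have : ~ (forall t, F a.+1 (u t)).
  move=> hall; have := dim_le (hF.1 a.+1 ltac:(lia)) hu2 hall; lia.
move/not_all_ex_not => [t ht].
have [l [hl hl2]] := surj (u t) (hu1 t).
have lnz : ~ F a.+1 l.
  move=> hl'; apply: ht; have -> : u t = l - (l - u t) by rewrite opprB addrC subrK.
  apply: (sub_sub (flag_sub hF _)) => //; lia.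
split => //; exists (fun _ => l); split => //.
  move=> e; rewrite big_ord1 => he i; rewrite (ord1 i).
  case: (eqVneq (e ord0) 0) => // hne; exfalso; apply: lnz.
  rewrite (scale_eq0 he hne); apply: sub0; apply: (flag_sub hF); lia.
move=> y hy.
have [hla _ _] := hl; have [hya _ _] := hy.
have [r hr] := gr_line hF (i := a) ltac:(lia) hla lnz hya.
exists (fun _ => r); rewrite big_ord1; apply/eqP; rewrite -subr_eq0; apply/eqP.
apply: inj => //; apply: (sub_sub hL) => //; exact: sub_scale.
Qed.

End Aux.

Theorem lemma2p3 (R : unitRingType) (HR : skew_field R) (m : nat)
  (A B C : nat -> 'rV[R]_m -> Prop)
  (hA : is_flag A) (hB : is_flag B) (hC : is_flag C)
  (hgen : generic A B C) :
  (forall a b c : nat, (1 <= a)%N -> (1 <= b)%N -> (1 <= c)%N ->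
     (a + b + c)%N = (m + 2)%N ->
     [/\ has_dim (tri_cap A B C a b c) 1,
         proj_gr_iso (tri_cap A B C a b c) A a,
         proj_gr_iso (tri_cap A B C a b c) B b &
         proj_gr_iso (tri_cap A B C a b c) C c]) /\
  (forall a b c : nat, (1 <= a)%N -> (1 <= b)%N -> (1 <= c)%N ->
     (a + b + c)%N = (m + 2)%N ->
     forall x y z w : 'rV[R]_m, A a.-1 x ->
       canon A B C a b c x y -> canon B C A b c a y z ->
       canon C A B c a b z w -> A a (w - x)) /\
  (forall a b c : nat, (2 <= a)%N -> (2 <= b)%N -> (2 <= c)%N ->
     (a + b + c)%N = (m + 4)%N ->
     forall x0 x1 x2 x3 x4 x5 x6 : 'rV[R]_m, A a.-1 x0 ->
       canon A B C a b.-1 c.-1 x0 x1 ->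
       canon B C A b.-1 c a.-1 x1 x2 ->
       canon C A B c a.-1 b.-1 x2 x3 ->
       canon A B C a.-1 b c.-1 x3 x4 ->
       canon B C A b c.-1 a.-1 x4 x5 ->
       canon C A B c.-1 a b.-1 x5 x6 ->
       A a (x6 + x0)).
Proof.
have hgen2 := generic_rot hgen; have hgen3 := generic_rot hgen2.
split; [|split].
- move=> a b c ha hb hc hs; split.
  + exact (part1_dim HR hA hB hC hgen ha hb hc hs).
  + exact (part1_iso hA hB hC hgen ha hb hc hs).
  + apply: (proj_gr_iso_ext _ (part1_iso hB hC hA hgen2 hb hc ha ltac:(lia))).
    by move=> v; split => -[? ? ?]; split.
  + apply: (proj_gr_iso_ext _ (part1_iso hC hA hB hgen3 hc ha hb ltac:(lia))).
    by move=> v; split => -[? ? ?]; split.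
- case=> // a; case=> // b; case=> // c _ _ _ hs x y z w _.
  move=> [l1 [[a1 b1 c1] hx1 hy1]] [l2 [[b2 c2 a2] hy2 hz2]] [l3 [[c3 a3 b3] hz3 hw3]].
  rewrite /= in a1 b1 c1 b2 c2 a2 c3 a3 b3.
  have sA := flag_sub (i := a) hA ltac:(lia).
  have sA' := flag_sub (i := a.+1) hA ltac:(lia).
  have sB := flag_sub (i := b) hB ltac:(lia).
  have sB' := flag_sub (i := b.+1) hB ltac:(lia).
  have sC := flag_sub (i := c) hC ltac:(lia).
  have sC' := flag_sub (i := c.+1) hC ltac:(lia).
  have e12 : l1 - l2 = 0.
    have [inj _] := hgen a b.+1 c ltac:(lia).
    apply: inj; first exact: (sub_sub sA).
      by rewrite -(subBB l1 l2 y); apply: (sub_sub sB').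
    exact: (sub_sub sC).
  have e23 : l2 - l3 = 0.
    have [inj _] := hgen a b c.+1 ltac:(lia).
    apply: inj; first exact: (sub_sub sA).
      exact: (sub_sub sB).
    by rewrite -(subBB l2 l3 z); apply: (sub_sub sC').
  move/eqP: e12; rewrite subr_eq0 => /eqP e12.
  move/eqP: e23; rewrite subr_eq0 => /eqP e23.
  have -> : w - x = (l1 - x) - (l1 - w) by rewrite opprB [RHS]addrC addrA subrK.
  by apply: (sub_sub sA') => //; rewrite e12 e23.
- case=> [|[|a]] //; case=> [|[|b]] //; case=> [|[|c]] // _ _ _ hs.
  move=> x0 x1 x2 x3 x4 x5 x6 _.
  move=> [l1 [[a1 b1 c1] h10 h11]] [l2 [[b2 c2 a2] h21 h22]].
  move=> [l3 [[c3 a3 b3] h32 h33]] [l4 [[a4 b4 c4] h43 h44]].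
  move=> [l5 [[b5 c5 a5] h54 h55]] [l6 [[c6 a6 b6] h65 h66]].
  rewrite /= in a1 b1 c1 h10 h11 b2 c2 a2 h21 h22 c3 a3 b3 h32 h33
    a4 b4 c4 h43 h44 b5 c5 a5 h54 h55 c6 a6 b6 h65 h66.
  have sA0 := flag_sub (i := a) hA ltac:(lia).
  have sA1 := flag_sub (i := a.+1) hA ltac:(lia).
  have sA2 := flag_sub (i := a.+2) hA ltac:(lia).
  have sB0 := flag_sub (i := b) hB ltac:(lia).
  have sB1 := flag_sub (i := b.+1) hB ltac:(lia).
  have sB2 := flag_sub (i := b.+2) hB ltac:(lia).
  have sC0 := flag_sub (i := c) hC ltac:(lia).
  have sC1 := flag_sub (i := c.+1) hC ltac:(lia).
  have sC2 := flag_sub (i := c.+2) hC ltac:(lia).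
  have mB : forall v, B b.+1 v -> B b v by move=> v; apply: flag_mono => //; lia.
  have mC : forall v, C c.+1 v -> C c v by move=> v; apply: flag_mono => //; lia.
  have e23 : l2 - l3 = 0.
    have [inj _] := hgen a b c.+2 ltac:(lia).
    apply: inj; first exact: (sub_sub sA0).
      exact: (sub_sub sB0).
    by rewrite -(subBB l2 l3 x2); apply: (sub_sub sC2).
  have e45 : l4 - l5 = 0.
    have [inj _] := hgen a b.+2 c ltac:(lia).
    apply: inj; first exact: (sub_sub sA0).
      by rewrite -(subBB l4 l5 x4); apply: (sub_sub sB2).
    exact: (sub_sub sC0).
  move/eqP: e23; rewrite subr_eq0 => /eqP e23.
  move/eqP: e45; rewrite subr_eq0 => /eqP e45.
  have hA43 : A a.+1 (l4 - l3) by rewrite -(subBB l4 l3 x3); apply: (sub_sub sA1).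
  have hB13 : B b.+1 (l1 - l3).
    by rewrite -e23 -(subBB l1 l2 x1); apply: (sub_sub sB1).
  have hC64 : C c.+1 (l6 - l4).
    by rewrite e45 -(subBB l6 l5 x5); apply: (sub_sub sC1).
  have eX : l1 + (l4 - l3) = 0.
    have [inj _] := hgen a.+1 b.+1 c ltac:(lia).
    apply: inj; first exact: (sub_add sA1).
      rewrite addrA addrAC; exact: (sub_add sB1).
    apply: (sub_add sC0) => //; apply: (sub_sub sC0) => //; exact: mC.
  have eY : l6 + (l3 - l4) = 0.
    have [inj _] := hgen a.+1 b c.+1 ltac:(lia).
    apply: inj.
    - apply: (sub_add sA1) => //; rewrite -opprB; exact: (sub_opp sA1).
    - apply: (sub_add sB0) => //; apply: (sub_sub sB0) => //; exact: mB.
    - rewrite addrCA; exact: (sub_add sC1).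
  have e16 : l1 + l6 = 0.
    have : (l1 + (l4 - l3)) + (l6 + (l3 - l4)) = 0 by rewrite eX eY addr0.
    by rewrite addrACA -[l3 - l4]opprB addrN addr0.
  have hl6 : l6 = - l1.
    by apply/eqP; rewrite -addr_eq0 addrC e16.
  have -> : x6 + x0 = - (l6 - x6) - (l1 - x0).
    by rewrite hl6 !opprB opprK addrACA subrr addr0.
  apply: (sub_sub sA2) => //; exact: (sub_opp sA2).
Qed.
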